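(* Let $A$ be an AUF algebra and let $M,N$ be coherent left $A$-modules. Then $\dim\mathrm{Hom}_{A,-}(M,N)<\infty$.
   Context: All algebras are associative $\mathbb C$-algebras, not necessarily unital. An idempotent is $e$ with $e^2=e$. An algebra $A$ is AUF if there is a family $(e_i)_{i\in\mathfrak I}$ of mutually orthogonal idempotents with $\dim e_iAe_j<\infty$ and $A=\sum_{i,j}e_iAe_j$. A left $A$-module $M$ is quasicoherent if $\xi\in A\xi$ for all $\xi\in M$, and coherent if moreover finitely generated. $\mathrm{Hom}_{A,-}(M,N)$ denotes the space of left $A$-module homomorphisms. *)

(* Defs.v *)
From HB Require Import structures.
From mathcomp Require Import all_boot all_order all_algebra.
From mathcomp.real_closed Require Import complex.
From mathcomp Require Import Rstruct.
Set Implicit Arguments. Unset Strict Implicit. Unset Printing Implicit Defensive.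
Import Order.TTheory GRing.Theory Num.Theory.
Local Open Scope ring_scope.

Definition CC : fieldType := (complex Rdefinitions.R : fieldType).

(* Associative C-algebras, not necessarily unital. *)
Record nuAlgebra := NuAlgebra {
  alg_carrier :> lmodType CC;
  amul : alg_carrier -> alg_carrier -> alg_carrier;
  amulA : forall x y z, amul x (amul y z) = amul (amul x y) z;
  amulDl : forall x y z, amul (x + y) z = amul x z + amul y z;
  amulDr : forall x y z, amul x (y + z) = amul x y + amul x z;
  amulZl : forall (c : CC) x y, amul (c *: x) y = c *: amul x y;
  amulZr : forall (c : CC) x y, amul x (c *: y) = c *: amul x y
}.

Record lmodule (A : nuAlgebra) := LModule {
  mod_carrier :> lmodType CC;
  act : A -> mod_carrier -> mod_carrier;
  actA : forall (a b : A) m, act (amul a b) m = act a (act b m);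
  actDl : forall (a b : A) m, act (a + b) m = act a m + act b m;
  actDr : forall (a : A) m n, act a (m + n) = act a m + act a n;
  actZl : forall (c : CC) (a : A) m, act (c *: a) m = c *: act a m;
  actZr : forall (c : CC) (a : A) m, act a (c *: m) = c *: act a m
}.

Definition finite_dim (V : lmodType CC) (S : V -> Prop) : Prop :=
  exists (n : nat) (v : 'I_n -> V),
    forall x, S x -> exists c : 'I_n -> CC, x = \sum_(k < n) c k *: v k.

Definition idempotent (A : nuAlgebra) (e : A) : Prop := amul e e = e.

Definition corner (A : nuAlgebra) (e f : A) (x : A) : Prop :=
  exists a : A, x = amul (amul e a) f.

Definition AUF (A : nuAlgebra) : Prop :=
  exists (I : Type) (e : I -> A),
    [/\ forall i, idempotent (e i),
        forall i j, i <> j -> amul (e i) (e j) = 0,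
        forall i j, finite_dim (corner (e i) (e j)) &
        forall x : A, exists (n : nat) (ij : 'I_n -> I * I) (y : 'I_n -> A),
          (forall k, corner (e (ij k).1) (e (ij k).2) (y k)) /\
          x = \sum_(k < n) y k].

Definition quasicoherent (A : nuAlgebra) (M : lmodule A) : Prop :=
  forall xi : M, exists a : A, xi = act a xi.

Definition fin_gen (A : nuAlgebra) (M : lmodule A) : Prop :=
  exists (n : nat) (g : 'I_n -> M),
    forall m : M, exists (c : 'I_n -> CC) (a : 'I_n -> A),
      m = \sum_(k < n) (c k *: g k + act (a k) (g k)).

Definition coherent (A : nuAlgebra) (M : lmodule A) : Prop :=
  quasicoherent M /\ fin_gen M.

Definition is_hom (A : nuAlgebra) (M N : lmodule A) (f : M -> N) : Prop :=
  [/\ forall x y, f (x + y) = f x + f y,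
      forall (c : CC) x, f (c *: x) = c *: f x &
      forall (a : A) x, f (act a x) = act a (f x)].

Definition finite_dim_Hom (A : nuAlgebra) (M N : lmodule A) : Prop :=
  exists (n : nat) (h : 'I_n -> (M -> N)),
    (forall k, is_hom (h k)) /\
    forall f : M -> N, is_hom f ->
      exists c : 'I_n -> CC, forall x, f x = \sum_(k < n) c k *: h k x.

(* Main.v *)
Require Import Defs.
From mathcomp Require Import all_boot all_order all_algebra.
From Stdlib Require Import Classical ClassicalEpsilon.
Set Implicit Arguments. Unset Strict Implicit. Unset Printing Implicit Defensive.
Import GRing.Theory.
Local Open Scope ring_scope.

Inductive inspan (V : lmodType CC) (s : seq V) : V -> Prop :=
| sp0 : inspan s 0
| spG x : x \in s -> inspan s x
| spD x y : inspan s x -> inspan s y -> inspan s (x + y)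
| spZ (a : CC) x : inspan s x -> inspan s (a *: x).

Lemma span_sub (V : lmodType CC) (s s' : seq V) x :
  {subset s <= s'} -> inspan s x -> inspan s' x.
Proof.
move=> ss; elim=> [|y /ss|y z _ Hy _ Hz|a y _ Hy]; try by constructor.
Qed.

Lemma span_sum (V : lmodType CC) (s : seq V) n (F : 'I_n -> V) :
  (forall k, inspan s (F k)) -> inspan s (\sum_(k < n) F k).
Proof.
move=> H; apply: (big_ind (inspan s)) => //; [exact: sp0|exact: spD].
Qed.

Lemma span_subZ (V : lmodType CC) (s : seq V) x y (a : CC) :
  inspan s x -> inspan s y -> inspan s (x - a *: y).
Proof. by move=> Hx Hy; rewrite -scaleNr; apply: spD => //; apply: spZ. Qed.

Lemma span_nil (V : lmodType CC) (x : V) : inspan [::] x -> x = 0.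
Proof.
elim=> [|y|y z _ -> _ ->|a y _ ->] //.
  by rewrite addr0.
by rewrite scaler0.
Qed.

Lemma span_cons (V : lmodType CC) (w : V) s x :
  inspan (w :: s) x -> exists (d : CC) y, inspan s y /\ x = d *: w + y.
Proof.
elim=> [|y|y z _ [d1 [y1 [H1 ->]]] _ [d2 [y2 [H2 ->]]]|a y _ [d [y1 [H1 ->]]]].
- by exists 0, 0; split; [exact: sp0| rewrite scale0r addr0].
- rewrite in_cons => /orP [/eqP ->|Hy].
    by exists 1, 0; split; [exact: sp0| rewrite scale1r addr0].
  by exists 0, y; split; [exact: spG| rewrite scale0r add0r].
- exists (d1 + d2), (y1 + y2); split; first exact: spD.
  by rewrite scalerDl addrACA.
- exists (a * d), (a *: y1); split; first exact: spZ.
  by rewrite scalerDr scalerA.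
Qed.

Lemma fd_sub (V : lmodType CC) (s : seq V) : forall S : V -> Prop,
  (forall x y (a : CC), S x -> S y -> S (x - a *: y)) ->
  (forall x, S x -> inspan s x) ->
  exists r (t : 'I_r -> V), (forall j, S (t j)) /\
    forall x, S x -> exists c : 'I_r -> CC, x = \sum_(j < r) c j *: t j.
Proof.
elim: s => [|w s IH] S Scl Ssp.
  exists 0, (fun _ => 0); split=> [[]//|x /Ssp /span_nil ->].
  by exists (fun _ => 0); rewrite big_ord0.
pose S' x := S x /\ inspan s x.
have S'cl : forall x y (a : CC), S' x -> S' y -> S' (x - a *: y).
  by move=> x y a [Sx Hx] [Sy Hy]; split; [apply: Scl|apply: span_subZ].
have [r' [t' [Ht' Hc']]] := IH S' S'cl (fun x H => H.2).
case: (classic (exists s0, S s0 /\ ~ inspan s s0)) => [[s0 [Ss0 Ns0]]|Hno]; last first.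
  exists r', t'; split; first by move=> j; case: (Ht' j).
  move=> x Sx; apply: Hc'; split => //.
  apply: NNPP => Hn; apply: Hno; by exists x.
have [c0 [y0 [Hy0 Es0]]] := span_cons (Ssp _ Ss0).
have c0n : c0 != 0.
  apply/eqP => c00; apply: Ns0; by rewrite Es0 c00 scale0r add0r.
exists r'.+1, (fun j => if unlift ord0 j is Some j' then t' j' else s0); split.
  by move=> j; case: unliftP => [j' _|_] //; case: (Ht' j').
move=> x Sx.
have [d [y [Hy Ex]]] := span_cons (Ssp _ Sx).
pose q := d / c0.
have Sz : S' (x - q *: s0).
  split; first exact: Scl.
  have -> : x - q *: s0 = y - q *: y0.
    rewrite Ex Es0 scalerDr scalerA /q divfK // opprD addrACA subrr add0r //.
  exact: span_subZ.
have [c' Ec'] := Hc' _ Sz.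
exists (fun j => if unlift ord0 j is Some j' then c' j' else q).
rewrite big_ord_recl unlift_none.
under eq_bigr do rewrite liftK.
by rewrite -Ec' addrC subrK.
Qed.

Section Mod.
Variables (A : nuAlgebra).
Section L. Variable M : lmodule A.

Lemma act0r (a : A) : act a (0 : M) = 0.
Proof. by apply: (addrI (act a 0)); rewrite -actDr !addr0. Qed.
Lemma act0l (x : M) : act (0 : A) x = 0.
Proof. by apply: (addrI (act 0 x)); rewrite -actDl !addr0. Qed.
Lemma actNr (a : A) (x : M) : act a (- x) = - act a x.
Proof. by rewrite -scaleN1r actZr scaleN1r. Qed.
Lemma act_sumr (a : A) n (F : 'I_n -> M) :
  act a (\sum_(k < n) F k) = \sum_(k < n) act a (F k).
Proof. exact: (big_morph (act a) (actDr a) (act0r a)). Qed.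
Lemma act_suml (x : M) n (F : 'I_n -> A) :
  act (\sum_(k < n) F k) x = \sum_(k < n) act (F k) x.
Proof. by elim/big_rec2: _ => [|k y1 y2 _ <-]; rewrite ?act0l ?actDl. Qed.

End L.
Variables (M N : lmodule A).
Lemma hom0 (f : M -> N) : is_hom f -> f 0 = 0.
Proof. by case=> fD _ _; apply: (addrI (f 0)); rewrite -fD !addr0. Qed.
Lemma hom_sum (f : M -> N) n (F : 'I_n -> M) : is_hom f ->
  f (\sum_(k < n) F k) = \sum_(k < n) f (F k).
Proof. move=> hf; have [fD _ _] := hf; exact: (big_morph f fD (hom0 hf)). Qed.

Lemma hom_sub (f g : M -> N) : is_hom f -> is_hom g -> is_hom (fun x => f x - g x).
Proof.
case=> fD fZ fA [gD gZ gA]; split.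
- by move=> x y; rewrite fD gD opprD addrACA.
- by move=> c x; rewrite fZ gZ scalerBr.
- by move=> a x; rewrite actDr actNr fA gA.
Qed.

Lemma hom_comb n (c : 'I_n -> CC) (H : 'I_n -> M -> N) :
  (forall j, is_hom (H j)) -> is_hom (fun x => \sum_(j < n) c j *: H j x).
Proof.
move=> hH; split.
- move=> x y; rewrite -big_split; apply: eq_bigr => j _.
  by case: (hH j) => hD _ _; rewrite hD scalerDr.
- move=> a x; rewrite scaler_sumr; apply: eq_bigr => j _.
  by case: (hH j) => _ hZ _; rewrite hZ !scalerA mulrC.
- move=> a x; rewrite act_sumr; apply: eq_bigr => j _.
  by case: (hH j) => _ _ hA; rewrite hA actZr.
Qed.

Lemma hom_subZ (f g : M -> N) (a : CC) : is_hom f -> is_hom g ->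
  is_hom (fun x => f x - a *: g x).
Proof.
move=> hf [gD gZ gA]; apply: hom_sub => //; split.
- by move=> x y; rewrite gD scalerDr.
- by move=> c x; rewrite gZ !scalerA mulrC.
- by move=> b x; rewrite gA actZr.
Qed.

End Mod.

Lemma combine (V : lmodType CC) n (Q : 'I_n -> V -> Prop) :
  (forall k, exists s : seq V, forall x, Q k x -> inspan s x) ->
  exists s : seq V, forall k x, Q k x -> inspan s x.
Proof.
move=> H.
pose F k := proj1_sig (constructive_indefinite_description _ (H k)).
exists (flatten [seq F k | k <- enum 'I_n]) => k x Qx.
apply: (span_sub _ (proj2_sig (constructive_indefinite_description _ (H k)) x Qx)).
move=> y Hy; apply/flattenP; exists (F k) => //; apply: map_f; by rewrite mem_enum.
Qed.

Lemma span_map (V W : lmodType CC) (phi : V -> W) (s : seq V) x :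
  phi 0 = 0 -> (forall x y, phi (x + y) = phi x + phi y) ->
  (forall (a : CC) x, phi (a *: x) = a *: phi x) ->
  inspan s x -> inspan (map phi s) (phi x).
Proof.
move=> p0 pD pZ; elim=> [|y Hy|y z _ Hy _ Hz|a y _ Hy].
- rewrite p0; exact: sp0.
- apply: spG; exact: map_f.
- rewrite pD; exact: spD.
- rewrite pZ; exact: spZ.
Qed.

Section Main.
Variables (A : nuAlgebra) (I : Type) (e : I -> A).
Hypothesis He : forall i, Defs.idempotent (e i).
Hypothesis Hfd : forall i j, finite_dim (corner (e i) (e j)).
Hypothesis Hdec : forall x : A, exists (n : nat) (ij : 'I_n -> I * I) (y : 'I_n -> A),
          (forall k, corner (e (ij k).1) (e (ij k).2) (y k)) /\
          x = \sum_(k < n) y k.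

Lemma step_p (N : lmodule A) i j j' (y : A) (z0 : N) :
  corner (e j) (e j') y ->
  exists s : seq N, forall x, (exists w, x = act (amul (e i) w) (act y z0)) -> inspan s x.
Proof.
move=> [z Ey].
have [r [v Hv]] := Hfd i j.
exists [seq act (v q) (act y z0) | q <- enum 'I_r] => x [w ->].
have Ey' : y = amul (e j) y by rewrite Ey !amulA He.
have [c Ec] := Hv (amul (amul (e i) w) (e j)) (ex_intro _ w erefl).
have -> : act (amul (e i) w) (act y z0) = act (amul (amul (e i) w) (e j)) (act y z0).
  by rewrite (actA (amul (e i) w) (e j)) -(actA (e j) y) -Ey'.
rewrite Ec act_suml.
apply: span_sum => q; rewrite actZl; apply: spZ; apply: spG.
apply: map_f; by rewrite mem_enum.
Qed.

Lemma step_i (N : lmodule A) : coherent N ->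
  forall i, exists s : seq N, forall x : N, inspan s (act (e i) x).
Proof.
move=> [qN [n [h genN]]] i.
have Hm : forall m, exists s : seq N, forall v,
    (exists w, v = act (amul (e i) w) (h m)) -> inspan s v.
  move=> m; have [b Eb] := qN (h m).
  have [np [ij [y [Hy Ey]]]] := Hdec b.
  have Hp : forall p, exists s : seq N, forall v,
      (exists w, v = act (amul (e i) w) (act (y p) (h m))) -> inspan s v.
    by move=> p; apply: step_p; exact: Hy p.
  have [s Hs] := combine Hp.
  exists s => v [w ->]; rewrite [h m]Eb Ey act_suml act_sumr.
  apply: span_sum => p; apply: Hs; by exists w.
have [s Hs] := combine Hm.
exists s => x; have [c [a ->]] := genN x.
rewrite act_sumr; apply: span_sum => k; rewrite actDr actZr.
apply: spD; first apply: spZ; apply: (Hs k).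
  by exists (e i); rewrite He.
by exists (a k); rewrite actA.
Qed.

End Main.

Theorem proposition7p9 (A : nuAlgebra) (M N : lmodule A) :
  AUF A -> coherent M -> coherent N -> finite_dim_Hom M N.
Proof.
move=> [I [e [He _ Hfd Hdec]]] cM cN.
have Hi := step_i He Hfd Hdec cN.
have [qM [nM [g genM]]] := cM.
have Hk : forall k, exists s : seq N, forall v,
    (exists f : M -> N, is_hom f /\ v = f (g k)) -> inspan s v.
  move=> k; have [a Ea] := qM (g k).
  have [nl [ij [y [Hy Ey]]]] := Hdec a.
  have Hl : forall l, exists s : seq N, forall v,
      (exists x, v = act (e (ij l).1) x) -> inspan s v.
    by move=> l; have [s Hs] := Hi (ij l).1; exists s => v [x ->].
  have [s Hs] := combine Hl.
  exists s => v [f [hf ->]].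
  have -> : f (g k) = act a (f (g k)).
    by case: hf => _ _ fA; rewrite -fA -Ea.
  rewrite Ey act_suml; apply: span_sum => l.
  have [z ->] := Hy l.
  by rewrite -amulA actA; apply: Hs; eexists.
have [sN HsN] := combine Hk.
pose V := {ffun 'I_nM -> N}.
pose delta (k : 'I_nM) (w : N) : V := [ffun k' => if k' == k then w else 0].
pose S (v : V) := exists f : M -> N, is_hom f /\ v = [ffun k => f (g k)].
have Scl : forall x y (a : CC), S x -> S y -> S (x - a *: y).
  move=> x y a [f [hf ->]] [f' [hf' ->]].
  exists (fun x => f x - a *: f' x); split; first exact: hom_subZ.
  by apply/ffunP => k; rewrite !ffunE.
pose sV := flatten [seq [seq delta k w | w <- sN] | k <- enum 'I_nM].
have Ssp : forall v, S v -> inspan sV v.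
  move=> v [f [hf ->]].
  have -> : [ffun k => f (g k)] = \sum_(k < nM) delta k (f (g k)).
    apply/ffunP => k; rewrite sum_ffunE ffunE (bigD1 k) //= ffunE eqxx big1 ?addr0 //.
    by move=> k' nk'; rewrite ffunE eq_sym (negbTE nk').
  apply: span_sum => k.
  have H1 : inspan [seq delta k w | w <- sN] (delta k (f (g k))).
    apply: span_map; last by apply: (HsN k); exists f.
    - by apply/ffunP => k'; rewrite !ffunE; case: ifP.
    - by move=> x y; apply/ffunP => k'; rewrite !ffunE; case: ifP; rewrite ?addr0.
    - by move=> b x; apply/ffunP => k'; rewrite !ffunE; case: ifP; rewrite ?scaler0.
  apply: (span_sub _ H1) => u Hu; apply/flattenP.
  exists [seq delta k w | w <- sN] => //; apply: map_f; by rewrite mem_enum.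
have [r [t [Ht Hc]]] := fd_sub Scl Ssp.
pose H j := proj1_sig (constructive_indefinite_description _ (Ht j)).
have HH : forall j, is_hom (H j) /\ t j = [ffun k => H j (g k)] :=
  fun j => proj2_sig (constructive_indefinite_description _ (Ht j)).
exists r, H; split; first by move=> j; case: (HH j).
move=> f hf.
have [c Ec] := Hc [ffun k => f (g k)] (ex_intro _ f (conj hf erefl)).
exists c => x.
pose D := fun x => f x - \sum_(j < r) c j *: H j x.
have hD : is_hom D.
  apply: hom_sub => //; apply: hom_comb => j; by case: (HH j).
have Dg : forall k, D (g k) = 0.
  move=> k; apply/eqP; rewrite subr_eq0; apply/eqP.
  have := congr1 (fun v : V => v k) Ec; rewrite /= ffunE => ->.
  rewrite sum_ffunE; apply: eq_bigr => j _.
  by rewrite ffunE; case: (HH j) => _ ->; rewrite ffunE.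
have : D x = 0.
  have [cx [ax ->]] := genM x.
  rewrite hom_sum //; apply: big1 => k _.
  by case: hD => hDD hDZ hDA; rewrite hDD hDZ hDA Dg scaler0 act0r addr0.
by move/eqP; rewrite subr_eq0 => /eqP.
Qed.
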